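(* An almost discrete (Tychonoff) space $X$ is weakly Grothendieck if and only if $t(X)=\omega$.
   Context: A space is almost discrete if it has exactly one non-isolated point. $C_p(X)$ is the space of continuous real-valued functions on $X$ with the pointwise convergence topology. A space $Z$ is a $g$-space if every subset $A\subseteq Z$ such that every infinite subset of $A$ has an accumulation point in $Z$ has compact closure in $Z$; $X$ is weakly Grothendieck if $C_p(X)$ is a $g$-space. $t(X)$ denotes the tightness of $X$. *)

(* Defs.v *)
From HB Require Import structures.
From mathcomp Require Import all_boot all_order all_algebra.
From mathcomp Require Import all_classical all_reals all_analysis.
Unset Printing Implicit Defensive.
Import Order.TTheory GRing.Theory Num.Theory.
Import numFieldTopology.Exports numFieldNormedType.Exports.
Local Open Scope classical_set_scope.
Local Open Scope ring_scope.

Definition tychonoff_space (R : realType) (X : topologicalType) : Prop :=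
  accessible_space X /\
  forall (B : set X) (x : X), closed B -> ~ B x ->
    exists f : X -> R, [/\ continuous f, f x = 0 & forall y, B y -> f y = 1].

Definition almost_discrete (X : topologicalType) : Prop :=
  exists x : X, ~ isolated [set: X] x /\
    forall y : X, y <> x -> isolated [set: X] y.

Definition g_space (Z : topologicalType) : Prop :=
  forall A : set Z,
    (forall B : set Z, B `<=` A -> infinite_set B -> exists z : Z, limit_point B z) ->
    compact (closure A).

Definition RX (R : realType) (X : topologicalType) : topologicalType :=
  {ptws X -> R}%type.

Definition Cp_set (R : realType) (X : topologicalType) : set (RX R X) :=
  fun f : RX R X => continuous (f : X -> R).

Definition Cp (R : realType) (X : topologicalType) : topologicalType :=
  set_type (@Cp_set R X).

Definition weakly_grothendieck (R : realType) (X : topologicalType) : Prop :=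
  g_space (@Cp R X).

(* t(X) = omega, i.e. countable tightness (tightness is by convention an
   infinite cardinal, so t(X) = omega iff t(X) <= omega). *)
Definition tightness_omega (X : topologicalType) : Prop :=
  forall (A : set X) (x : X), closure A x ->
    exists2 B : set X, B `<=` A /\ countable B & closure B x.

(* Main.v *)
Require Import Defs.
From mathcomp Require Import all_boot all_order all_algebra.
From mathcomp Require Import all_classical all_reals all_analysis.
From HB Require Import structures.
From mathcomp Require Import all_boot all_order all_algebra.
From mathcomp Require Import all_classical all_reals all_analysis.
From mathcomp Require Import lra.
Import Order.TTheory GRing.Theory Num.Theory.
Import numFieldTopology.Exports numFieldNormedType.Exports.
Local Open Scope classical_set_scope.
Local Open Scope ring_scope.
Section S.
Variables (R : realType) (X : topologicalType).
Lemma nbhsR (x e : R) : 0 < e -> nbhs x [set y | `|y - x| < e].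
Proof.
move=> e0; apply/nbhs_ballP; exists e => //= y; rewrite /ball /= distrC.
done.
Qed.

Lemma nbhs_RX (g : RX R X) (x : X) (e : R) : 0 < e ->
  nbhs g [set h : RX R X | `|h x - g x| < e].
Proof.
move=> e0.
have := @proj_continuous X (fun _ => R) x g.
move=> /(_ _ (@nbhsR (g x) e e0)). done.
Qed.

Lemma nbhs_CpP (k : Cp R X) (U : set (Cp R X)) : nbhs k U <->
  exists2 V : set (RX R X), nbhs (val k) V & forall k', V (val k') -> U k'.
Proof.
split.
  rewrite nbhsE => -[B [oB Bk] BU].
  case: oB => A oA AB.
  exists A; first by apply: open_nbhs_nbhs; split => //; rewrite -AB in Bk.
  by move=> k' Ak'; apply: BU; rewrite -AB.
case=> V; rewrite nbhsE => -[A [oA Ak] AV] VU.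
rewrite nbhsE; exists (set_val @^-1` A); last by move=> k' /AV /VU.
split => //; by exists A.
Qed.

Lemma Cp_T1 (h z : Cp R X) : z <> h -> nbhs h (~` [set z]).
Proof.
move=> zh.
have vzh : val z <> val h by move=> /val_inj.
have [x zx] : exists x, val z x <> val h x.
  apply: contrapT => nx; apply: vzh; apply: funext => x.
  by apply: contrapT => hx; apply: nx; exists x.
have d0 : 0 < `|val z x - val h x| by rewrite normr_gt0 subr_eq0; apply/eqP.
apply/nbhs_CpP; exists [set k : RX R X | `|k x - val h x| < `|val z x - val h x| ].
  exact: nbhs_RX.
by move=> k /= + kz; rewrite kz ltxx.
Qed.

Lemma LP_inf (f : nat -> Cp R X) (h : Cp R X) (W : set (Cp R X)) (N : nat) :
  limit_point (range f) h -> nbhs h W -> exists2 m, (N <= m)%N & W (f m).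
Proof.
move=> lp Wh.
have cl : forall N, nbhs h [set k | W k /\ forall j, (j < N)%N -> f j <> h -> k <> f j].
  elim=> [|n IH].
    by apply: filterS Wh => k Wk; split.
  case: (pselect (f n = h)) => fnh.
    apply: filterS IH => k [Wk Hk]; split => // j; rewrite ltnS leq_eqVlt.
    case/orP => [/eqP -> //|]; exact: Hk.
  have H2 : nbhs h ([set k | W k /\ (forall j : nat, (j < n)%N -> f j <> h -> k <> f j)]
     `&` [set~ f n]) by apply: filterI; [exact: IH| exact: Cp_T1].
  apply: (filterS _ H2) => k [[Wk Hk] kn]; split => // j.
  rewrite ltnS leq_eqVlt; case/orP => [/eqP -> _ kfn|]; [exact: kn|exact: Hk].
have [y [yh [m _ fmy] [Wy Hy]]] := lp _ (cl N).
exists m; last by rewrite fmy.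
rewrite leqNgt; apply/negP => mN.
apply: (Hy m mN); last by [].
by rewrite fmy; apply/eqP.
Qed.

Definition gprop (A : set (Cp R X)) := forall B, B `<=` A -> infinite_set B ->
  exists z, limit_point B z.

Lemma seq_cluster (A : set (Cp R X)) (f : nat -> Cp R X) : gprop A ->
  (forall n, A (f n)) ->
  exists h : Cp R X, forall W, nbhs h W -> forall N, exists2 m, (N <= m)%N & W (f m).
Proof.
move=> gA Af.
case: (pselect (exists k, forall N, exists2 n, (N <= n)%N & f n = f k)) => [[k Hk]|nH].
  exists (f k) => W Wk N; have [n Nn fnk] := Hk N; exists n => //.
  by rewrite fnk; exact: nbhs_singleton.
have Hn : forall k, exists N, forall n, (N <= n)%N -> f n <> f k.
  move=> k; apply: contrapT => nk; apply: nH; exists k => N.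
  apply: contrapT => nN; apply: nk; exists N => n Nn fnk; apply: nN; by exists n.
have key : forall s : seq (Cp R X), (forall z, z \in s -> exists k, f k = z) ->
    exists M, forall n, (M <= n)%N -> f n \notin s.
  elim=> [|z s IH] H; first by exists 0%N.
  have [k fk] := H z (mem_head _ _).
  have [M1 HM1] : exists M, forall n, (M <= n)%N -> f n \notin s.
    by apply: IH => w ws; apply: H; rewrite in_cons ws orbT.
  have [M2 HM2] := Hn k.
  exists (maxn M1 M2) => n Mn; rewrite in_cons negb_or; apply/andP; split.
    by apply/eqP; rewrite -fk; apply: HM2; exact: leq_trans (leq_maxr _ _) Mn.
  by apply: HM1; exact: leq_trans (leq_maxl _ _) Mn.
have inf : infinite_set (range f).
  move=> /finite_fsetP [S rS].
  have [M HM] : exists M, forall n, (M <= n)%N -> f n \notin finmap.enum_fset S.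
    apply: key => z zS; have : range f z by rewrite rS.
    by case=> k _ fk; exists k.
  have : range f (f M) by exists M.
  by rewrite rS => /= fMS; move: (HM M (leqnn M)); rewrite fMS.
have [h lh] : exists h, limit_point (range f) h.
  by apply: gA inf => _ [n _ <-]; exact: Af.
by exists h => W Wh N; exact: LP_inf lh Wh.
Qed.

Lemma cont_of_p (p : X) (f : X -> R) : (forall y, y <> p -> nbhs y [set y]) ->
  (forall e : R, 0 < e -> exists2 U, nbhs p U & forall y, U y -> `|f y - f p| < e) ->
  continuous f.
Proof.
move=> Hiso Hp x; case: (pselect (x = p)) => [->|xp] V.
  move=> /nbhs_ballP [e /= e0 eV]; have [U Up HU] := Hp e e0.
  apply: (filterS _ Up) => y /HU fy; apply: eV; rewrite /ball /= distrC; exact: fy.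
move=> /nbhs_singleton fV; apply: (filterS _ (Hiso x xp)) => y ->; exact: fV.
Qed.

Lemma p_of_cont (p : X) (f : X -> R) (e : R) : continuous f -> 0 < e ->
  exists2 U, nbhs p U & forall y, U y -> `|f y - f p| < e.
Proof.
move=> cf e0; exists (f @^-1` [set z | `|z - f p| < e]) => //.
exact: (cf p _ (@nbhsR (f p) e e0)).
Qed.

Lemma bounded_of_g (A : set (Cp R X)) (x : X) : gprop A ->
  exists M : R, forall a, A a -> `|val a x| <= M.
Proof.
move=> gA; apply: contrapT => nM.
have Hn : forall n : nat, exists a, A a /\ n%:R < `|val a x|.
  move=> n; apply: contrapT => nn; apply: nM; exists n%:R => a Aa.
  rewrite leNgt; apply/negP => lt; apply: nn; by exists a.
have [f Hf] := choice Hn.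
have [h Hh] := @seq_cluster A f gA (fun n => (Hf n).1).
have W : nbhs h [set k : Cp R X | `|val k x - val h x| < 1].
  apply/nbhs_CpP; exists [set k : RX R X | `|k x - val h x| < 1]; last by [].
  exact: nbhs_RX.
have [m Nm Wm] := Hh _ W (Num.Def.archi_bound (`|val h x| + 1)).
have h1 := (Hf m).2.
have hb : `|val h x| + 1 < (Num.Def.archi_bound (`|val h x| + 1))%:R.
  by apply: archi_boundP; rewrite addr_ge0.
have tri : `|val (f m) x| <= `|val (f m) x - val h x| + `|val h x|.
  by have := ler_normD (val (f m) x - val h x) (val h x); rewrite subrK.
have Nm' : (Num.Def.archi_bound (`|val h x| + 1))%:R <= m%:R :> R by rewrite ler_nat.
move: Wm => /= Wm.
lra.
Qed.

Lemma nbhs_RX_fin (g : RX R X) (t : nat -> X) (r : R) (n : nat) : 0 < r ->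
  nbhs g [set k : RX R X | forall i, (i <= n)%N -> `|k (t i) - g (t i)| < r].
Proof.
move=> r0; elim: n => [|n IH].
  apply: (filterS _ (@nbhs_RX g (t 0%N) r r0)) => k H i.
  by rewrite leqn0 => /eqP ->.
have H2 : nbhs g ([set k : RX R X | forall i, (i <= n)%N -> `|k (t i) - g (t i)| < r]
   `&` [set k : RX R X | `|k (t n.+1) - g (t n.+1)| < r]).
  by apply: filterI; [exact: IH | exact: nbhs_RX].
apply: (filterS _ H2) => k [H1 H3] i; rewrite leq_eqVlt => /orP [/eqP -> //|].
rewrite ltnS; exact: H1.
Qed.

Lemma cont_of_cl (p : X) (A : set (Cp R X)) (g : RX R X) :
  (forall y, y <> p -> nbhs y [set y]) -> tightness_omega X -> gprop A ->
  (forall V, nbhs g V -> exists a, A a /\ V (val a)) -> continuous (g : X -> R).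
Proof.
move=> Hiso tight gA cl.
apply: (@cont_of_p p g Hiso) => e e0.
apply: contrapT => nU.
pose S := [set y | e <= `|g y - g p|].
have clS : closure S p.
  move=> U Up; apply: contrapT => nS; apply: nU; exists U => // y Uy.
  rewrite ltNge; apply/negP => ey; apply: nS; exists y; split => //.
have [B [BS cB] clB] := tight S p clS.
case/pfcard_geP: cB => [B0|[s]].
  by have := clB _ filterT; rewrite B0 => -[y [[]]].
have sB n : B (s n) by apply: funS.
pose t := fun i : nat => if i is i'.+1 then s i' else p.
have Hf : forall n, exists a, A a /\
    forall i, (i <= n)%N -> `|val a (t i) - g (t i)| < n.+1%:R^-1.
  move=> n; apply: cl (@nbhs_RX_fin g t _ n _).
  by rewrite invr_gt0 ltr0n.
have [f Hf'] := choice Hf.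
have [h Hh] := @seq_cluster A f gA (fun n => (Hf' n).1).
have hg : forall i, val h (t i) = g (t i).
  move=> i; apply: contrapT => hne.
  pose d := `|val h (t i) - g (t i)|.
  have d0 : 0 < d by rewrite normr_gt0 subr_eq0; apply/eqP.
  have d20 : 0 < d / 2 by rewrite divr_gt0.
  have W : nbhs h [set k : Cp R X | `|val k (t i) - val h (t i)| < d / 2].
    apply/nbhs_CpP; exists [set k : RX R X | `|k (t i) - val h (t i)| < d / 2];
      last by [].
    exact: nbhs_RX.
  have [m Nm Wm] := Hh _ W (maxn i (Num.Def.archi_bound (2 / d))).
  have im : (i <= m)%N by exact: leq_trans (leq_maxl _ _) Nm.
  have fm := (Hf' m).2 i im.
  have ab : 2 / d < (Num.Def.archi_bound (2 / d))%:R.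
    by apply: archi_boundP; rewrite divr_ge0 // ltW.
  have abm : (Num.Def.archi_bound (2 / d))%:R <= m.+1%:R :> R.
    by rewrite ler_nat; apply: leq_trans (leq_maxr _ _) _; apply: leq_trans Nm _.
  have M0 : 0 < m.+1%:R :> R by rewrite ltr0n.
  have h2 : 2 < m.+1%:R * d.
    by rewrite -ltr_pdivrMr //; apply: lt_le_trans ab abm.
  have h3 : m.+1%:R^-1 < d / 2.
    rewrite -[X in X < _]mul1r ltr_pdivrMr //.
    move: h2; rewrite mulrC => h2.
    rewrite mulrAC; rewrite ltr_pdivlMr //; by rewrite mul1r.
  have tri := ler_distD (val (f m) (t i)) (val h (t i)) (g (t i)).
  have Wm' : `|val (f m) (t i) - val h (t i)| < d / 2 := Wm.
  rewrite distrC in Wm'.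
  rewrite -/d in tri.
  have : `|val h (t i) - val (f m) (t i)| + `|val (f m) (t i) - g (t i)| < d / 2 + d / 2.
    by rewrite ltrD // (lt_trans fm h3).
  by rewrite -splitr => /(le_lt_trans tri); rewrite ltxx.
have ch : continuous (val h : X -> R) := set_valP h.
have [U Up HU] := @p_of_cont p _ e ch e0.
have [y [By Uy]] := clB U Up.
have [n _ sny] := (@surj _ _ _ _ s) y By.
have Ut : U (t n.+1) by rewrite /= sny.
have := HU _ Ut; change (`|val h (t n.+1) - val h (t 0%N)| < e -> False).
rewrite !hg; have := BS _ (sB n); rewrite /S /= => H1 H2.
by move: H1; rewrite leNgt H2.
Qed.

Lemma dirB (p : X) : (forall y, y <> p -> nbhs y [set y]) -> tightness_omega X ->
  weakly_grothendieck R X.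
Proof.
move=> Hiso tight A gA.
have gA' : gprop A := gA.
have [M HM] : exists M : X -> R, forall x a, A a -> `|val a x| <= M x.
  have [M HM] := choice (fun x => @bounded_of_g A x gA').
  by exists M => x; exact: HM x.
have clP : forall k, closure A k -> forall x, `|val k x| <= M x.
  move=> k clk x; rewrite leNgt; apply/negP => Hlt.
  have d0 : 0 < `|val k x| - M x by rewrite subr_gt0.
  have W : nbhs k [set k' : Cp R X | `|val k' x - val k x| < `|val k x| - M x].
    apply/nbhs_CpP; exists [set k' : RX R X | `|k' x - val k x| < `|val k x| - M x];
      last by [].
    exact: nbhs_RX.
  have [a [Aa Wa]] := clk _ W.
  have := HM x a Aa.
  have tri : `|val k x| <= `|val k x - val a x| + `|val a x|.
    by have := ler_normD (val k x - val a x) (val a x); rewrite subrK.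
  have Wa' : `|val a x - val k x| < `|val k x| - M x := Wa.
  rewrite distrC in Wa'.
  lra.
move=> F PF FclA.
pose G := ((val : Cp R X -> RX R X) @ F).
have PG : ProperFilter G by exact: fmap_proper_filter.
pose P := [set k : RX R X | forall x, `[- M x, M x]%classic (k x)].
have cP : compact P := tychonoff (fun x => @segment_compact R (- M x) (M x)).
have GP : G P.
  have : F ((val : Cp R X -> RX R X) @^-1` P); last by [].
  apply: (filterS _ FclA) => k clk x /=; rewrite in_itv /= -ler_norml; exact: clP.
have [g [Pg clg]] := cP G PG GP.
have clA : forall V, nbhs g V -> exists a, A a /\ V (val a).
  move=> V; rewrite nbhsE => -[V' [oV' V'g] V'V].
  have GA : G (val @` closure A).
    have : F ((val : Cp R X -> RX R X) @^-1` (val @` closure A)); last by [].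
    by apply: (filterS _ FclA) => k ck; exists k.
  have [_ [[k clk <-] V'k]] := clg _ V' GA (open_nbhs_nbhs (conj oV' V'g)).
  have Vk : nbhs k (val @^-1` V').
    by apply/nbhs_CpP; exists V' => //; apply: open_nbhs_nbhs.
  have [a [Aa V'a]] := clk _ Vk.
  by exists a; split => //; exact: V'V.
have gc : continuous (g : X -> R) := @cont_of_cl p A g Hiso tight gA' clA.
pose g' : Cp R X := exist _ g (mem_set gc).
have clu : cluster F g'.
  move=> B W FB /nbhs_CpP [V Vg VW].
  have GB : G (val @` B).
    have : F ((val : Cp R X -> RX R X) @^-1` (val @` B)); last by [].
    by apply: (filterS _ FB) => k ck; exists k.
  have [_ [[b Bb <-] Vb]] := clg _ V GB Vg.
  by exists b; split => //; exact: VW.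
exists g'; split => //.
apply: (@closed_closure _ A) => W Wg'.
have [k [clk Wk]] := clu _ _ FclA Wg'.
by exists k.
Qed.

Lemma val_cont : continuous (val : Cp R X -> RX R X).
Proof. by move=> k V Vk; apply/nbhs_CpP; exists V. Qed.

Lemma RX_hausdorff : hausdorff_space (RX R X).
Proof.
by apply: (@hausdorff_product X (fun _ => R)) => _ p q; exact: norm_hausdorff.
Qed.

Definition chi (C : set X) : X -> R := fun y => if pselect (C y) then 1 else 0.

Lemma dirA (p : X) : (forall y, y <> p -> nbhs y [set y]) ->
  weakly_grothendieck R X -> tightness_omega X.
Proof.
move=> Hiso gs A x clAx.
case: (pselect (A x)) => Ax.
  exists [set x]; last exact: subset_closure.
  by split; [move=> _ -> | exact: countable1].
case: (pselect (x = p)) => [xp|xp]; last first.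
  by have [y [Ay yx]] := clAx _ (Hiso x xp); move: Ay; rewrite yx.
subst x.
apply: contrapT => nB.
have chi_cont : forall C, C `<=` A -> countable C -> continuous (chi C).
  move=> C CA cC.
  have nclC : ~ closure C p.
    by move=> h; apply: nB; exists C.
  have [U Up UC] : exists2 U, nbhs p U & forall y, U y -> ~ C y.
    apply: contrapT => nU; apply: nclC => U Up; apply: contrapT => nCU.
    by apply: nU; exists U => // y Uy Cy; apply: nCU; exists y.
  apply: (@cont_of_p p (chi C) Hiso) => e e0; exists U => // y Uy.
  rewrite /chi; case: (pselect (C y)) => [Cy|nCy] /=; first by exfalso; exact: UC Uy Cy.
  by case: (pselect (C p)) => [Cp'|nCp] /=; [exfalso; exact: Ax (CA _ Cp') | rewrite subr0 normr0].
pose AA : set (Cp R X) :=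
  [set k | exists C, [/\ C `<=` A, countable C & val k = chi C]].
have gAA : gprop AA.
  move=> B BAA /infiniteP /card_leP [f].
  pose b (n : nat) : Cp R X := val (f (exist _ n (in_setT n))).
  have bB n : B (b n) by exact: set_valP.
  have binj : injective b.
    move=> n m bnm; have fnm := val_inj bnm.
    have := @inj _ _ _ f _ _ (in_setT _) (in_setT _) fnm.
    by move=> /(congr1 val).
  have [Cs HC] := choice (fun n => BAA _ (bB n)).
  pose Cu := \bigcup_(n in [set: nat]) Cs n.
  have CuA : Cu `<=` A by move=> y [n _ Csy]; have [+ _ _] := HC n; apply.
  have cCu : countable Cu.
    by apply: bigcup_countable => // n _; have [_ + _] := HC n.
  have nclCu : ~ closure Cu p by move=> h; apply: nB; exists Cu.
  have [U Up UC] : exists2 U, nbhs p U & forall y, U y -> ~ Cu y.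
    apply: contrapT => nU; apply: nclCu => U Up; apply: contrapT => nCU.
    by apply: nU; exists U => // y Uy Cy; apply: nCU; exists y.
  pose Ay (y : X) : set R := if pselect (Cu y) then [set 0; 1] else [set 0].
  have cAy : forall y, compact (Ay y).
    move=> y; rewrite /Ay; case: (pselect (Cu y)) => Cuy; last exact: compact_set1.
    by apply: compactU; exact: compact_set1.
  pose K := [set k : RX R X | forall y, Ay y (k y)].
  have cK : compact K := tychonoff cAy.
  pose G := ((fun n => val (b n)) @ \oo) : set_system (RX R X).
  have PG : ProperFilter G by exact: fmap_proper_filter.
  have GK : G K.
    exists 0%N => // n _ y; have [_ _ ->] := HC n; rewrite /chi /Ay.
    case: (pselect (Cs n y)) => Csy; case: (pselect (Cu y)) => Cuy //.
    - by right.
    - by exfalso; apply: Cuy; exists n.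
    - by left.
  have [z [Kz clz]] := cK G PG GK.
  have zc : continuous (z : X -> R).
    apply: (@cont_of_p p z Hiso) => e e0; exists U => // y Uy.
    have z0 : forall y, ~ Cu y -> z y = 0.
      by move=> y' ny; have := Kz y'; rewrite /Ay; case: (pselect (Cu y')).
    rewrite z0 ?z0 ?subr0 ?normr0 //; last exact: UC.
    by move=> /CuA.
  pose hz : Cp R X := exist _ z (mem_set zc).
  exists hz => W /nbhs_CpP [V Vz VW].
  have claim : forall N, exists n, (N <= n)%N /\ V (val (b n)).
    move=> N.
    have GN : G [set k | exists2 n, (N <= n)%N & k = val (b n)].
      by exists N => // n Nn; exists n.
    by have [_ [[n Nn ->] Vn]] := clz _ V GN Vz; exists n.
  have [n1 [_ Vn1]] := claim 0%N.
  case: (pselect (b n1 = hz)) => bn1.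
    have [n2 [n12 Vn2]] := claim n1.+1.
    exists (b n2); split => //; last exact: VW.
    apply/eqP => bn2; rewrite -bn2 in bn1.
    by move: n12; rewrite (binj _ _ bn1) ltnn.
  by exists (b n1); split => //; [apply/eqP | exact: VW].
have cK := gs AA gAA.
have cK' : compact ((val : Cp R X -> RX R X) @` closure AA).
  by apply: continuous_compact => //; apply: continuous_subspaceT; exact: val_cont.
have clK := compact_closed RX_hausdorff cK'.
have chiA_cl : closure ((val : Cp R X -> RX R X) @` closure AA) (chi A).
  move=> W Wc.
  pose D (F : seq X) : set (RX R X) :=
    [set chi (A `&` [set y | y \in F']) | F' in [set F' : seq X | {subset F <= F'}]].
  pose G := filter_from [set: seq X] D.
  have FG : Filter G.
    apply: filter_from_filter; first by exists [::].
    move=> F1 F2 _ _; exists (F1 ++ F2) => // k [F' sub <-]; split.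
      by exists F' => // z zF; apply: sub; rewrite mem_cat zF.
    by exists F' => // z zF; apply: sub; rewrite mem_cat zF orbT.
  have Gcvg : G --> (chi A : RX R X).
    apply/pointwise_cvgP => x0 V Vx.
    exists [:: x0] => // k [F' sub <-] /=.
    have x0F : x0 \in F' by apply: sub; rewrite mem_seq1.
    suff -> : chi (A `&` [set y | y \in F']) x0 = chi A x0 by exact: nbhs_singleton.
    rewrite /chi; case: (pselect ((A `&` [set y | y \in F']) x0)) => [H1|nA] /=.
      case: (pselect (A x0)) => // nA0 /=.
      by exfalso; apply: nA0; case: H1.
    case: (pselect (A x0)) => Ax0 /=; last by [].
    by exfalso; apply: nA; split.
  have [F _ DW] := Gcvg _ Wc.
  have cont : continuous (chi (A `&` [set y | y \in F])).
    apply: chi_cont; first exact: subIsetl.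
    apply: finite_set_countable; apply: finite_setIr.
    exact: finite_seq.
  pose kk : Cp R X := @exist _ (fun f => f \in Cp_set R X) _ (mem_set cont).
  exists (val kk); split.
    exists kk => //; apply: subset_closure; exists (A `&` [set y | y \in F]).
    split; [exact: subIsetl | apply: finite_set_countable; apply: finite_setIr; exact: finite_seq | by []].
  by apply: DW; exists F.
have [k _ kA] := clK _ chiA_cl.
have cA : continuous (chi A) by rewrite -kA; exact: set_valP k.
have [U Up HU] := @p_of_cont p (chi A) 1 cA ltr01.
have [y [Ay Uy]] := clAx U Up.
have := HU y Uy; rewrite /chi; case: (pselect (A y)) => // Ay' /=; case: (pselect (A p)) => // nAp /=.
by rewrite subr0 normr1 ltxx.
Qed.
End S.


Theorem corollary2 (R : realType) (X : topologicalType) :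
  tychonoff_space R X -> almost_discrete X ->
  (weakly_grothendieck R X <-> tightness_omega X).
Proof.
move=> _ [p [_ Hp]].
have Hiso : forall y, y <> p -> nbhs y [set y].
  by move=> y yp; have [_ [V Vy VE]] := Hp y yp; rewrite -VE setIT.
split; [exact: dirA Hiso | exact: dirB Hiso].
Qed.
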